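(* Let $K$ be a field and $m,n,r$ positive integers. Let $R=K[x_{ij}^k \mid 1\le i\le m,\ 1\le j\le n,\ 1\le k\le r]$ and let $I_{mn}^r$ be the ideal generated by all $2$-minors of the horizontal and of the vertical concatenation of the $m\times n$ matrices $X_k=(x_{ij}^k)$, $k=1,\dots,r$. Let $P_{mnr}$ be the poset which is the disjoint union of three pairwise incomparable chains of cardinalities $m-1$, $n-1$, $r-1$, with a natural labeling $P_{mnr}=\{p_1,\dots,p_{N}\}$, $N=m+n+r-3$ (i.e. $p_i\prec p_j$ implies $i<j$). Then the $h$-polynomial of $R/I_{mn}^r$ equals $\sum_{w\in\mathcal L(P_{mnr})}t^{\operatorname{des}(w)}$.
   Context: $\mathcal L(P)$ is the set of linear extensions of $P$, i.e. bijections $w:P\to\{1,\dots,|P|\}$ with $p\preceq q\Rightarrow w(p)\le w(q)$. A descent of $w$ is an index $i$ such that $w(p_j)=i$ and $w(p_k)=i+1$ with $j>k$; $\operatorname{des}(w)$ is the number of descents. The $h$-polynomial of a standard graded algebra $A$ is the numerator of its Hilbert series written in reduced form $h(t)/(1-t)^{\dim A}$. *)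

(* Defs.v *)
From HB Require Import structures.
From mathcomp Require Import all_boot all_order all_algebra.
From mathcomp Require Import mpoly.
Set Implicit Arguments. Unset Strict Implicit. Unset Printing Implicit Defensive.
Import Order.TTheory GRing.Theory Num.Theory.
Local Open Scope ring_scope.

Definition in_ideal (N : nat) (K : fieldType) (G : {mpoly K[N]} -> Prop)
  (p : {mpoly K[N]}) : Prop :=
  exists s : seq ({mpoly K[N]} * {mpoly K[N]}),
    (forall x, x \in s -> G x.2) /\ p = \sum_(x <- s) x.1 * x.2.

Definition indep_mod (N : nat) (K : fieldType) (G : {mpoly K[N]} -> Prop)
  (d k : nat) (p : 'I_k -> {mpoly K[N]}) : Prop :=
  (forall i, p i \is d.-homog) /\
  (forall c : 'I_k -> K, in_ideal G (\sum_(i < k) c i *: p i) ->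
     forall i, c i = 0).

(* hilb_dim G d k  :<->  dim_K (R/<G>)_d = k  (R = K[x_1..x_N], standard
   grading, <G> homogeneous): k is the maximal size of a family of degree-d
   forms linearly independent modulo <G>. *)
Definition hilb_dim (N : nat) (K : fieldType) (G : {mpoly K[N]} -> Prop)
  (d k : nat) : Prop :=
  (exists p : 'I_k -> {mpoly K[N]}, indep_mod G d p) /\
  (forall p : 'I_k.+1 -> {mpoly K[N]}, ~ indep_mod G d p).

(* h is the h-polynomial of R/<G>: the Hilbert series of R/<G> equals
   h(t)/(1-t)^D in reduced form (h(1) <> 0) for some D.  The coefficient
   of t^j in (1-t)^{-D} is 'C(j + D - 1, j) (in nat this also gives the
   right value 1,0,0,... when D = 0). *)
Definition is_h_polynomial (N : nat) (K : fieldType) (G : {mpoly K[N]} -> Prop)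
  (h : {poly int}) : Prop :=
  h.[1] != 0 /\
  exists D : nat, forall d : nat, exists k : nat,
    hilb_dim G d k /\
    (k%:Z = \sum_(i < d.+1) h`_i * ('C(d - i + D - 1, d - i))%:Z)%R.

Definition var_index (m n r : nat) := ('I_m * 'I_n * 'I_r)%type.
Definition nvars (m n r : nat) : nat := #|{: var_index m n r}|.

Definition xv (K : fieldType) (m n r : nat) (i : 'I_m) (j : 'I_n) (k : 'I_r)
  : {mpoly K[nvars m n r]} := 'X_(enum_rank (i, j, k)).

(* Generators of I_{mn}^r: the 2-minors of the horizontal concatenation
   [X_1 | ... | X_r]  (m x nr, entry at row i, column (j,k) is x_{ij}^k)
   and of the vertical concatenation (mr x n, entry at row (i,k), column j
   is x_{ij}^k). A 2-minor with rows a<>b and columns c<>e is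
   A_ac A_be - A_ae A_bc (its sign does not affect the ideal). *)
Definition minors2 (K : fieldType) (m n r : nat)
  (g : {mpoly K[nvars m n r]}) : Prop :=
  (exists (i i' : 'I_m) (j j' : 'I_n) (k k' : 'I_r),
     i != i' /\ (j, k) != (j', k') /\
     g = xv K i j k * xv K i' j' k' - xv K i j' k' * xv K i' j k)
  \/
  (exists (i i' : 'I_m) (j j' : 'I_n) (k k' : 'I_r),
     (i, k) != (i', k') /\ j != j' /\
     g = xv K i j k * xv K i' j' k' - xv K i j' k * xv K i' j k').

Definition Pmnr (m n r : nat) := ('I_(m.-1) + 'I_(n.-1) + 'I_(r.-1))%type.

Definition Ple (m n r : nat) (p q : Pmnr m n r) : bool :=
  match p, q with
  | inl (inl a), inl (inl b) => (a <= b)%N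
  | inl (inr a), inl (inr b) => (a <= b)%N
  | inr a, inr b => (a <= b)%N
  | _, _ => false
  end.

Definition Nsize (m n r : nat) : nat := (m.-1 + n.-1 + r.-1)%N.

(* a natural labeling P = {p_1..p_N}, encoded 0-based: lab p is the index of p *)
Definition natural_labeling (m n r : nat) (lab : Pmnr m n r -> 'I_(Nsize m n r))
  : Prop :=
  bijective lab /\ forall p q, Ple p q -> (lab p <= lab q)%N.

Definition linext (m n r : nat) (w : {ffun Pmnr m n r -> 'I_(Nsize m n r)})
  : bool :=
  injectiveb w && [forall p, forall q, Ple p q ==> (w p <= w q)%N].

Definition des (m n r : nat) (lab : Pmnr m n r -> 'I_(Nsize m n r))
  (w : {ffun Pmnr m n r -> 'I_(Nsize m n r)}) : nat :=
  #|[set i : 'I_(Nsize m n r) | [exists p, exists q,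
      [&& (w p == i :> nat), (w q == i.+1 :> nat) & (lab q < lab p)%N]]]|.

Definition des_poly (m n r : nat) (lab : Pmnr m n r -> 'I_(Nsize m n r))
  : {poly int} :=
  \sum_(w : {ffun Pmnr m n r -> 'I_(Nsize m n r)} | linext w) 'X^(des lab w).

(* Main.v *)
Require Import Defs.
From HB Require Import structures.
From mathcomp Require Import all_boot all_order all_algebra.
From mathcomp Require Import mpoly.
From mathcomp Require Import ring zify.
Set Implicit Arguments. Unset Strict Implicit. Unset Printing Implicit Defensive.

Lemma card_bij_in (T1 T2 : finType) (A : {set T1}) (B : {set T2})
  (f : T1 -> T2) (g : T2 -> T1) :
  {in A, forall x, f x \in B} -> {in B, forall y, g y \in A} ->
  {in A, cancel f g} -> {in B, cancel g f} -> #|A| = #|B|.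
Proof.
move=> fAB gBA fK gK; apply/eqP; rewrite eqn_leq; apply/andP; split.
  rewrite -(card_in_imset (can_in_inj fK)); apply: subset_leq_card.
  by apply/subsetP => y /imsetP [x Hx ->]; apply: fAB.
rewrite -(card_in_imset (can_in_inj gK)); apply: subset_leq_card.
by apply/subsetP => y /imsetP [x Hx ->]; apply: gBA.
Qed.

Definition cnt (D : pred nat) i := count D (iota 0 i).

Lemma cntS D i : cnt D i.+1 = cnt D i + D i.
Proof. by rewrite /cnt -addn1 iotaD count_cat /= add0n addn0. Qed.

Lemma cnt0 D : cnt D 0 = 0. Proof. by []. Qed.

Lemma cnt_mono D i j : i <= j -> cnt D i <= cnt D j.
Proof.
move=> /subnK <-; elim: (j - i) => [|t IH] //.
by rewrite addSn cntS; apply: leq_trans IH (leq_addr _ _).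
Qed.

Definition okS (D : pred nat) (s : seq nat) :=
  forall i, i.+1 < size s -> nth 0 s i <= nth 0 s i.+1 /\ (D i -> nth 0 s i < nth 0 s i.+1).

Definition okB (D : pred nat) (s : seq nat) :=
  all (fun i => (nth 0 s i <= nth 0 s i.+1) && (D i ==> (nth 0 s i < nth 0 s i.+1)))
      (iota 0 (size s).-1).

Lemma okP D s : reflect (okS D s) (okB D s).
Proof.
apply: (iffP allP) => H.
  move=> i Hi; have := H i; rewrite mem_iota add0n.
  have -> : i < (size s).-1 by move: Hi; case: (size s) => //.
  by move=> /(_ isT) /andP [H1 /implyP H2].
move=> i; rewrite mem_iota add0n => Hi.
have Hi' : i.+1 < size s by move: Hi; case: (size s).
by have [H1 H2] := H i Hi'; rewrite H1 /=; apply/implyP.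
Qed.

Lemma ok_gap D s : okS D s -> forall i j, i <= j -> j < size s ->
  nth 0 s i + (cnt D j - cnt D i) <= nth 0 s j.
Proof.
move=> H i j Hij; elim: j Hij => [|j IH] Hij Hj.
  have -> : i = 0 by lia.
  by rewrite subnn addn0.
case: (ltngtP i j.+1) => Hc; last 1 first.
- by rewrite Hc subnn addn0.
- have := IH Hc (ltnW Hj); have [H1 H2] := H j Hj.
  have := @cnt_mono D i j Hc; rewrite cntS.
  case: (D j) H2 => H2; last lia.
  have := H2 isT; lia.
- lia.
Qed.

Lemma ok_low D s : okS D s -> forall i, i < size s -> cnt D i <= nth 0 s i.
Proof.
move=> H i Hi; have := ok_gap H (leq0n i) Hi; rewrite cnt0 subn0; lia.
Qed.

Lemma nth_val N p (t : N.-tuple 'I_p) i (Hi : i < N) :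
  nth 0 (map val t) i = tnth t (Ordinal Hi).
Proof.
have x0 : 'I_p by case: p t => [|p] t; [case: (tnth t (Ordinal Hi)) | exact: ord0].
by rewrite (nth_map x0) ?size_tuple // (tnth_nth x0).
Qed.

Lemma nth_valO N p (t : N.-tuple 'I_p) (i : 'I_N) :
  nth 0 (map val t) i = tnth t i.
Proof. by rewrite (nth_val t (ltn_ord i)); congr (val (tnth t _)); apply: val_inj. Qed.

Lemma tnth_inord N p (h : 'I_N -> nat) (j : 'I_N) : h j <= p ->
  tnth [tuple (inord (h i) : 'I_p.+1) | i < N] j = h j :> nat.
Proof. by move=> H; rewrite tnth_mktuple inordK. Qed.

Section Strict.
Variables (N d : nat) (D : pred nat).
Hypothesis HD : forall i, D i -> i.+1 < N.
Local Notation k := (cnt D N).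

Lemma cntN i : i < N -> cnt D N = cnt D N.-1.
Proof.
move=> Hi; have HN : N = N.-1.+1 by lia.
rewrite {1}HN cntS; case E: (D N.-1); last by rewrite addn0.
by have := HD E; rewrite -HN ltnn.
Qed.

Lemma cnt_leN i : i < N -> cnt D i <= k.
Proof. by move=> Hi; apply: cnt_mono; apply: ltnW. Qed.

Lemma ok_up (s : seq nat) : size s = N -> okS D s -> all (fun x => x <= d) s ->
  forall i, i < N -> nth 0 s i + (k - cnt D i) <= d.
Proof.
move=> Hs Hok Hall i Hi.
have HN1 : N.-1 < size s by lia.
have := ok_gap Hok (_ : i <= N.-1) HN1.
have : nth 0 s N.-1 <= d by apply: (allP Hall); apply: mem_nth.
rewrite (cntN Hi); lia.
Qed.

Definition Aset := [set t : N.-tuple 'I_d.+1 | okB D (map val t)].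

Lemma strict_card_gt : d < k -> #|Aset| = 0.
Proof.
move=> Hk; apply: eq_card0 => t; rewrite inE; apply/negP => /okP Hok.
have Npos : 0 < N by rewrite lt0n; apply/negP => /eqP E0; move: Hk; rewrite E0.
have Hall : all (fun x => x <= d) (map val t).
  by apply/allP => x /mapP [y _ ->]; rewrite -ltnS ltn_ord.
have Hs : size (map val t) = N by rewrite size_map size_tuple.
have := ok_up Hs Hok Hall Npos; rewrite cnt0; lia.
Qed.

Definition Fs (t : N.-tuple 'I_d.+1) : N.-tuple 'I_(d - k).+1 :=
  [tuple inord (tnth t i - cnt D i) | i < N].
Definition Gs (t : N.-tuple 'I_(d - k).+1) : N.-tuple 'I_d.+1 :=
  [tuple inord (tnth t i + cnt D i) | i < N].

Lemma Fs_bound t : t \in Aset -> forall i : 'I_N, tnth t i - cnt D i <= d - k.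
Proof.
rewrite inE => /okP Hok i.
have Hall : all (fun x => x <= d) (map val t).
  by apply/allP => x /mapP [y _ ->]; rewrite -ltnS ltn_ord.
have Hs : size (map val t) = N by rewrite size_map size_tuple.
have := ok_up Hs Hok Hall (ltn_ord i).
have := ok_low Hok (_ : i < size (map val t)); rewrite Hs => /(_ (ltn_ord i)).
have := cnt_leN (ltn_ord i).
by rewrite (nth_valO t i) /=; lia.
Qed.

Lemma strict_card_le : k <= d -> #|Aset| = 'C(N + (d - k), N).
Proof.
move=> Hk; rewrite -card_sorted_tuples.
apply: (card_bij_in (f := Fs) (g := Gs)).
- move=> t Ht; rewrite inE; apply/(sortedP 0) => i; rewrite size_map size_tuple => Hi.
  have Hi' : i < N by lia.
  rewrite (nth_val _ Hi) (nth_val _ Hi') /Fs !tnth_inord ?Fs_bound //.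
  move: Ht; rewrite inE => /okP Hok.
  have Hs : size (map val t) = N by rewrite size_map size_tuple.
  have Hi2 : i.+1 < size (map val t) by rewrite Hs.
  have [H1 H2] := Hok i Hi2.
  have := ok_low Hok (_ : i < size (map val t)); rewrite Hs => /(_ Hi').
  rewrite !(nth_val t Hi) !(nth_val t Hi') /= in H1 H2 * => H3.
  rewrite cntS; case: (D i) H2 => H2 /=; last by lia.
  by have := H2 isT; lia.
- move=> t; rewrite !inE => /(sortedP 0) Hs; apply/okP => i.
  rewrite size_map size_tuple => Hi; have Hi' : i < N by lia.
  have Hb : forall j : 'I_N, tnth t j + cnt D j <= d.
    by move=> j; have := ltn_ord (tnth t j); have := cnt_leN (ltn_ord j); lia.
  rewrite (nth_val _ Hi) (nth_val _ Hi') /Gs !tnth_inord ?Hb //=.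
  have := Hs i; rewrite size_map size_tuple => /(_ Hi).
  rewrite (nth_val _ Hi) (nth_val _ Hi') /= cntS => H.
  split; first lia.
  by move=> HDi; rewrite HDi /=; lia.
- move=> t Ht; apply: eq_from_tnth => i; apply: val_inj => /=.
  have HF := Fs_bound Ht i.
  have Hlow : cnt D i <= tnth t i.
    move: Ht; rewrite inE => /okP Hok.
    have Hs : size (map val t) = N by rewrite size_map size_tuple.
    have := ok_low Hok (_ : i < size (map val t)); rewrite Hs => /(_ (ltn_ord i)).
    by rewrite (nth_valO t i).
  have HFi : tnth (Fs t) i = tnth t i - cnt D i :> nat by rewrite /Fs tnth_inord.
  have := cnt_leN (ltn_ord i) => Hc.
  rewrite /Gs tnth_inord HFi ?subnK //; lia.
- move=> t Ht; apply: eq_from_tnth => i; apply: val_inj => /=.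
  have Hb : tnth t i + cnt D i <= d.
    by have := ltn_ord (tnth t i); have := cnt_leN (ltn_ord i); lia.
  have HGi : tnth (Gs t) i = tnth t i + cnt D i :> nat by rewrite /Gs tnth_inord.
  rewrite /= /Fs tnth_inord HGi ?addnK //.
  by have := ltn_ord (tnth t i); lia.
Qed.

End Strict.

Lemma card_cnt N (P : pred nat) : #|[set i : 'I_N | P i]| = count P (iota 0 N).
Proof.
rewrite cardsE cardE /enum_mem size_filter -val_enum_ord count_map.
rewrite /enum_mem filter_predT. by apply: eq_count.
Qed.

Section PP.
Variables (T : finType) (N : nat) (le : rel T) (lab : T -> 'I_N).
Hypotheses (HN : #|T| = N) (lab_inj : injective lab)
  (lab_mono : forall p q, le p q -> (lab p <= lab q)%N).

Definition linextG (w : {ffun T -> 'I_N}) : bool :=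
  injectiveb w && [forall p, forall q, le p q ==> (w p <= w q)%N].

Definition Dn (w : {ffun T -> 'I_N}) : pred nat := fun i =>
  [exists p, exists q, [&& (w p == i :> nat), (w q == i.+1 :> nat) & (lab q < lab p)%N]].

Definition desG (w : {ffun T -> 'I_N}) : nat :=
  #|[set i : 'I_N | [exists p, exists q,
      [&& (w p == i :> nat), (w q == i.+1 :> nat) & (lab q < lab p)%N]]]|.

Lemma desG_cnt w : desG w = cnt (Dn w) N.
Proof. exact: (card_cnt N (Dn w)). Qed.

Definition compat d (w : {ffun T -> 'I_N}) (f : {ffun T -> 'I_d.+1}) : bool :=
  [forall p, forall q, (w q == (w p).+1 :> nat) ==>
     (f p <= f q) && ((lab q < lab p) ==> (f p < f q))].

Lemma Dn_bound w i : Dn w i -> i.+1 < N.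
Proof.
by case/existsP => p /existsP [q /and3P [_ /eqP <- _]].
Qed.

Section Fixw.
Variables (d : nat) (w : {ffun T -> 'I_N}) (winv : 'I_N -> T).
Hypotheses (wK : cancel w winv) (winvK : cancel winv w).

Definition Ft (f : {ffun T -> 'I_d.+1}) : N.-tuple 'I_d.+1 := [tuple f (winv s) | s < N].
Definition Gt (t : N.-tuple 'I_d.+1) : {ffun T -> 'I_d.+1} := [ffun p => tnth t (w p)].

Lemma compat_ok f : compat w f = okB (Dn w) (map val (Ft f)).
Proof.
apply/forallP/okP => [H i|H p].
  rewrite size_map size_tuple => Hi.
  have Hi' : i < N by lia.
  rewrite (nth_val _ Hi) (nth_val _ Hi') /Ft !tnth_mktuple.
  set p := winv (Ordinal Hi'); set q := winv (Ordinal Hi).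
  have := H p => /forallP /(_ q) /implyP.
  rewrite /p /q !winvK /= => /(_ (eqxx _)) /andP [H1 /implyP H2].
  split => // /existsP [p' /existsP [q' /and3P [/eqP Hp' /eqP Hq' Hl]]].
  apply: H2.
  have -> : Ordinal Hi' = w p' by apply: val_inj.
  have -> : Ordinal Hi = w q' by apply: val_inj.
  by rewrite !wK.
apply/forallP => q; apply/implyP => /eqP Hq.
have Hi : (w p).+1 < size (map val (Ft f)) by rewrite size_map size_tuple -Hq.
have [H1 H2] := H _ Hi.
move: H1 H2; rewrite size_map size_tuple in Hi.
rewrite (nth_val _ Hi) (nth_val _ (ltn_ord (w p))) /Ft !tnth_mktuple.
have -> : Ordinal Hi = w q by apply: val_inj.
have -> : Ordinal (ltn_ord (w p)) = w p by apply: val_inj.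
rewrite !wK => H1 H2; rewrite H1 /=; apply/implyP => Hl; apply: H2.
by apply/existsP; exists p; apply/existsP; exists q; rewrite eqxx Hq eqxx Hl.
Qed.

Lemma card_compat :
  #|[set f : {ffun T -> 'I_d.+1} | compat w f]| = #|Aset N d (Dn w)|.
Proof.
apply: (card_bij_in (f := Ft) (g := Gt)).
- by move=> f; rewrite !inE compat_ok.
- move=> t; rewrite !inE => Ht; rewrite compat_ok.
  suff -> : Ft (Gt t) = t by [].
  by apply: eq_from_tnth => s; rewrite /Ft /Gt tnth_mktuple ffunE winvK.
- by move=> f _; apply/ffunP => p; rewrite /Gt /Ft ffunE tnth_mktuple wK.
- by move=> t _; apply: eq_from_tnth => s; rewrite /Ft /Gt tnth_mktuple ffunE winvK.
Qed.

End Fixw.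

End PP.

Lemma count_lt_iota k N : k <= N -> count (fun i => i < k) (iota 0 N) = k.
Proof.
move=> H; rewrite -(subnKC H) iotaD count_cat.
rewrite (eq_in_count (a2 := predT)); last by move=> i; rewrite mem_iota.
rewrite count_predT size_iota (eq_in_count (a2 := pred0)); last first.
  by move=> i; rewrite mem_iota /= => /andP [H1 _]; rewrite ltnNge H1.
by rewrite count_pred0 addn0.
Qed.

Section PP2.
Variables (T : finType) (N : nat) (le : rel T) (lab : T -> 'I_N).
Hypotheses (HN : #|T| = N) (lab_inj : injective lab)
  (lab_mono : forall p q, le p q -> (lab p <= lab q)%N).
Variable d : nat.
Implicit Types (f : {ffun T -> 'I_d.+1}) (w : {ffun T -> 'I_N}).

Definition opf f : bool := [forall p, forall q, le p q ==> (f p <= f q)%N].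

Definition klt f p q : bool := (f p < f q) || ((f p == f q :> nat) && (lab p < lab q)).

Lemma klt_irr f p : ~~ klt f p p.
Proof. rewrite /klt; lia. Qed.

Lemma klt_trans f p q s : klt f p q -> klt f q s -> klt f p s.
Proof. rewrite /klt; lia. Qed.

Lemma klt_asym f p q : klt f p q -> ~~ klt f q p.
Proof. rewrite /klt; lia. Qed.

Lemma klt_total f p q : p != q -> klt f p q || klt f q p.
Proof.
move=> Hpq; have Hl : (lab p != lab q :> nat).
  by apply: contra Hpq => /eqP /val_inj /lab_inj ->.
move: Hl; rewrite /klt; lia.
Qed.

Lemma wf_bound f p : #|[set q | klt f q p]| < N.
Proof.
rewrite -HN; apply: (@leq_trans #|[set~ p]|.+1); last first.
  have HT : 0 < #|T| by apply/card_gt0P; exists p.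
  by rewrite (cardsC1 p) prednK.
rewrite ltnS; apply: subset_leq_card; apply/subsetP => q; rewrite !inE.
by apply: contraTneq => ->; apply: klt_irr.
Qed.

Definition wf f : {ffun T -> 'I_N} := [ffun p => Ordinal (wf_bound f p)].

Lemma wf_lt f p q : klt f p q -> (wf f p < wf f q)%N.
Proof.
move=> H; rewrite !ffunE /=; apply: proper_card; apply/properP; split.
  by apply/subsetP => s; rewrite !inE => Hs; apply: klt_trans Hs H.
by exists p; rewrite !inE // (negbTE (klt_irr f p)).
Qed.

Lemma wf_inj f : injective (wf f).
Proof.
move=> p q E; apply/eqP; apply/negP => /negP Hpq.
case/orP: (klt_total f Hpq) => /wf_lt; rewrite E ltnn //.
Qed.

Lemma wf_linext f : opf f -> linextG le (wf f).
Proof.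
move=> Hf; apply/andP; split; first by apply/injectiveP; apply: wf_inj.
apply/forallP => p; apply/forallP => q; apply/implyP => Hle.
have [->|Hpq] := eqVneq p q; first by [].
apply: ltnW; apply: wf_lt.
have H1 : (f p <= f q)%N by move/forallP: Hf => /(_ p) /forallP /(_ q) /implyP; apply.
have H2 := lab_mono Hle.
have H3 : (lab p != lab q :> nat) by apply: contra Hpq => /eqP /val_inj /lab_inj ->.
move: H1 H2 H3; rewrite /klt; lia.
Qed.

Lemma wf_compat f : compat lab (wf f) f.
Proof.
apply/forallP => p; apply/forallP => q; apply/implyP => /eqP Hq.
have Hpq : p != q by apply/negP => /eqP E; move: Hq; rewrite E; lia.
have Hk : klt f p q.
  case/orP: (klt_total f Hpq) => // /wf_lt; rewrite Hq; lia.
move: Hk; rewrite /klt; lia.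
Qed.

Section Lin.
Variables (w : {ffun T -> 'I_N}) (f : {ffun T -> 'I_d.+1}).
Hypotheses (Hw : linextG le w) (Hc : compat lab w f).

Lemma w_inj : injective w.
Proof. by case/andP: Hw => /injectiveP. Qed.

Lemma w_bij : bijective w.
Proof. by apply: inj_card_bij; [exact: w_inj | rewrite card_ord HN]. Qed.

Lemma step1 p q : (w q = (w p).+1 :> nat) -> klt f p q.
Proof.
move=> Hq.
have := Hc => /forallP /(_ p) /forallP /(_ q) /implyP.
rewrite Hq eqxx => /(_ isT) /andP [H1 /implyP H2].
have Hpq : p != q by apply/negP => /eqP E; move: Hq; rewrite E; lia.
have H3 : (lab p != lab q :> nat) by apply: contra Hpq => /eqP /val_inj /lab_inj ->.
move: H1 H2 H3; rewrite /klt.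
case: (ltnP (lab q) (lab p)) => Hl H1 H2 H3; first by have := H2 isT; lia.
lia.
Qed.

Lemma chain : forall p q, (w p < w q)%N -> klt f p q.
Proof.
have [winv wK winvK] := w_bij.
suff H : forall t p q, (w q = w p + t.+1 :> nat) -> klt f p q.
  by move=> p q Hpq; apply: (H (w q - w p).-1); lia.
elim=> [|t IH] p q Hq; first by apply: step1; lia.
have Hb : (w p).+1 < N by have := ltn_ord (w q); lia.
pose q' := winv (Ordinal Hb).
have Hq' : w q' = (w p).+1 :> nat by rewrite /q' winvK.
apply: (@klt_trans _ _ q'); first by apply: step1.
by apply: IH; rewrite Hq' Hq; lia.
Qed.

Lemma compat_op : opf f.
Proof.
apply/forallP => p; apply/forallP => q; apply/implyP => Hle.
have [->|Hpq] := eqVneq p q; first by [].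
have H1 : (w p <= w q)%N by case/andP: Hw => _ /forallP /(_ p) /forallP /(_ q) /implyP; apply.
have H2 : (w p != w q :> nat) by apply: contra Hpq => /eqP /val_inj /w_inj ->.
have : klt f p q by apply: chain; lia.
rewrite /klt; lia.
Qed.

Lemma compat_unique : w = wf f.
Proof.
have [winv wK winvK] := w_bij.
apply/ffunP => p; apply: val_inj; rewrite ffunE /=.
have -> : [set q | klt f q p] = [set q | (w q < w p)%N].
  apply/setP => q; rewrite !inE; apply/idP/idP => [H|]; last exact: chain.
  have [E|Hqp] := eqVneq q p; first by rewrite E (negbTE (klt_irr f p)) in H.
  have H2 : (w q != w p :> nat) by apply: contra Hqp => /eqP /val_inj /w_inj ->.
  case: (ltnP (w q) (w p)) => // H3.
  have : klt f p q by apply: chain; lia.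
  by move/klt_asym; rewrite H.
rewrite -(card_imset _ w_inj).
have -> : w @: [set q | (w q < w p)%N] = [set s : 'I_N | (s < w p)%N].
  apply/setP => s; rewrite !inE; apply/imsetP/idP => [[q Hq ->]|Hs].
    by rewrite inE in Hq.
  by exists (winv s); rewrite ?inE winvK.
by rewrite (card_cnt N (fun s => s < w p)) count_lt_iota // ltnW.
Qed.

End Lin.

Lemma partition_op :
  #|[set f : {ffun T -> 'I_d.+1} | opf f]| =
  (\sum_(w | linextG le w) #|[set f : {ffun T -> 'I_d.+1} | compat lab w f]|)%N.
Proof.
rewrite -sum1dep_card.
under [RHS]eq_bigr => w _ do rewrite -sum1dep_card.
rewrite (exchange_big_dep opf) /=; last by move=> w f Hw Hc; apply: compat_op Hw Hc.
apply: eq_bigr => f Hf.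
rewrite (bigD1 (wf f)) /=; last by rewrite wf_linext // wf_compat.
rewrite big1 ?addn0 // => w /andP [/andP [Hw Hc] Hne].
by move: Hne; rewrite (compat_unique Hw Hc) eqxx.
Qed.

End PP2.

Section PP3.
Variables (T : finType) (N : nat) (le : rel T) (lab : T -> 'I_N).
Hypotheses (HN : #|T| = N) (lab_inj : injective lab)
  (lab_mono : forall p q, le p q -> (lab p <= lab q)%N).
Variable d : nat.

Lemma card_compat_w (w : {ffun T -> 'I_N}) : linextG le w ->
  #|[set f : {ffun T -> 'I_d.+1} | compat lab w f]| =
  if desG lab w <= d then 'C(N + (d - desG lab w), N) else 0.
Proof.
move=> Hw.
have [winv wK winvK] := w_bij HN Hw.
rewrite (card_compat lab HN d wK winvK) desG_cnt.
case: leqP => H.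
  by apply: strict_card_le => //; apply: Dn_bound.
by apply: strict_card_gt => //; apply: Dn_bound.
Qed.

Lemma partB :
  #|[set f : {ffun T -> 'I_d.+1} | opf le f]| =
  (\sum_(w | linextG le w) if desG lab w <= d then 'C(N + (d - desG lab w), N) else 0)%N.
Proof.
rewrite (partition_op HN lab_inj lab_mono d); apply: eq_bigr => w Hw.
exact: card_compat_w.
Qed.

End PP3.

Lemma sorted_tnth a p (t : a.-tuple 'I_p) :
  sorted leq (map val t) = [forall i : 'I_a, forall j : 'I_a, (i <= j) ==> (tnth t i <= tnth t j)].
Proof.
apply/idP/forallP => [Hs i|H].
  apply/forallP => j; apply/implyP => Hij.
  have := sorted_leq_nth leq_trans leqnn 0 Hs.
  rewrite size_map size_tuple => /(_ i j (ltn_ord i) (ltn_ord j) Hij).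
  by rewrite !nth_valO.
apply/(sortedP 0) => i; rewrite size_map size_tuple => Hi.
have Hi' : i < a by lia.
rewrite (nth_val _ Hi') (nth_val _ Hi).
by move: (H (Ordinal Hi')) => /forallP /(_ (Ordinal Hi)) /implyP; apply => /=.
Qed.

Section Chains.
Variables (m n r d : nat).
Local Notation P := (Pmnr m.+1 n.+1 r.+1).
Local Notation SA a := [set t : a.-tuple 'I_d.+1 | sorted leq (map val t)].

Definition toT (f : {ffun P -> 'I_d.+1}) :=
  ([tuple f (inl (inl i)) | i < m], [tuple f (inl (inr i)) | i < n], [tuple f (inr i) | i < r]).

Definition ofT (t : (m.-tuple 'I_d.+1 * n.-tuple 'I_d.+1) * r.-tuple 'I_d.+1) : {ffun P -> 'I_d.+1} :=
  [ffun p => match p with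
             | inl (inl a) => tnth t.1.1 a
             | inl (inr b) => tnth t.1.2 b
             | inr c => tnth t.2 c
             end].

Lemma card_op : #|[set f : {ffun P -> 'I_d.+1} | opf (@Ple m.+1 n.+1 r.+1) f]| =
  'C(m + d, m) * 'C(n + d, n) * 'C(r + d, r).
Proof.
rewrite -!card_sorted_tuples -!cardsX.
apply: (card_bij_in (f := toT) (g := ofT)).
- move=> f; rewrite !inE => /forallP H.
  rewrite !sorted_tnth; apply/andP; split; first apply/andP; try split; apply/forallP => i; apply/forallP => j;
  apply/implyP => Hij; rewrite !tnth_mktuple.
  + by move: (H (inl (inl i))) => /forallP /(_ (inl (inl j))) /implyP; apply.
  + by move: (H (inl (inr i))) => /forallP /(_ (inl (inr j))) /implyP; apply.
  + by move: (H (inr i)) => /forallP /(_ (inr j)) /implyP; apply.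
- move=> [[tA tB] tC]; rewrite !inE /= !sorted_tnth => /andP [/andP [/forallP HA /forallP HB] /forallP HC].
  apply/forallP => p; apply/forallP => q; apply/implyP.
  case: p => [[a|b]|c]; case: q => [[a'|b']|c'] //= H; rewrite !ffunE /=.
  + by move: (HA a) => /forallP /(_ a') /implyP; apply.
  + by move: (HB b) => /forallP /(_ b') /implyP; apply.
  + by move: (HC c) => /forallP /(_ c') /implyP; apply.
- move=> f _; apply/ffunP => p; rewrite ffunE.
  by case: p => [[a|b]|c]; rewrite /= tnth_mktuple.
- move=> [[tA tB] tC] _ /=.
  by congr (_, _, _); apply: eq_from_tnth => i; rewrite tnth_mktuple ffunE.
Qed.

End Chains.

Import Order.TTheory GRing.Theory Num.Theory.
Local Open Scope ring_scope.

Section Ideal.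
Variables (N : nat) (K : fieldType) (G : {mpoly K[N]} -> Prop).

Lemma in_ideal0 : in_ideal G 0.
Proof. by exists [::]; split => //; rewrite big_nil. Qed.

Lemma in_idealG g : G g -> in_ideal G g.
Proof.
move=> Gg; exists [:: (1, g)]; split; first by move=> x; rewrite inE => /eqP ->.
by rewrite big_seq1 mul1r.
Qed.

Lemma in_idealD p q : in_ideal G p -> in_ideal G q -> in_ideal G (p + q).
Proof.
move=> [s [Hs ->]] [t [Ht ->]]; exists (s ++ t); split; last by rewrite big_cat.
by move=> x; rewrite mem_cat => /orP [/Hs|/Ht].
Qed.

Lemma in_idealM q p : in_ideal G p -> in_ideal G (q * p).
Proof.
move=> [s [Hs ->]]; exists [seq (q * x.1, x.2) | x <- s]; split.
  by move=> x /mapP [y /Hs Hy ->].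
by rewrite big_map mulr_sumr; apply: eq_bigr => x _; rewrite mulrA.
Qed.

Lemma in_idealN p : in_ideal G p -> in_ideal G (- p).
Proof. by move=> H; rewrite -mulN1r; apply: in_idealM. Qed.

Lemma in_idealZ c p : in_ideal G p -> in_ideal G (c *: p).
Proof. by move=> H; rewrite -mul_mpolyC; apply: in_idealM. Qed.

Lemma in_ideal_sum (I : Type) (s : seq I) (F : I -> {mpoly K[N]}) :
  (forall i, in_ideal G (F i)) -> in_ideal G (\sum_(i <- s) F i).
Proof.
move=> H; elim: s => [|x s IH]; first by rewrite big_nil; exact: in_ideal0.
by rewrite big_cons; apply: in_idealD.
Qed.

Definition eqI (p q : {mpoly K[N]}) := in_ideal G (p - q).

Lemma eqI_refl p : eqI p p.
Proof. by rewrite /eqI subrr; exact: in_ideal0. Qed.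

Lemma eqI_sym p q : eqI p q -> eqI q p.
Proof. by rewrite /eqI => /in_idealN; rewrite opprB. Qed.

Lemma eqI_trans p q s : eqI p q -> eqI q s -> eqI p s.
Proof.
rewrite /eqI => H1 H2; have := in_idealD H1 H2.
by rewrite addrA subrK.
Qed.

Lemma eqI_eq p q : p = q -> eqI p q.
Proof. by move=> ->; exact: eqI_refl. Qed.

Lemma eqI_M c p q : eqI p q -> eqI (c * p) (c * q).
Proof. by rewrite /eqI -mulrBr; apply: in_idealM. Qed.

Lemma eqI_Z c p q : eqI p q -> eqI (c *: p) (c *: q).
Proof. by rewrite /eqI -scalerBr; apply: in_idealZ. Qed.

Lemma eqI_D p q p' q' : eqI p q -> eqI p' q' -> eqI (p + p') (q + q').
Proof.
rewrite /eqI => H1 H2; have := in_idealD H1 H2.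
by rewrite opprD addrACA.
Qed.

Lemma eqI_sum (I : Type) (s : seq I) (F F' : I -> {mpoly K[N]}) :
  (forall i, eqI (F i) (F' i)) -> eqI (\sum_(i <- s) F i) (\sum_(i <- s) F' i).
Proof.
move=> H; elim: s => [|x s IH]; first by rewrite !big_nil; exact: eqI_refl.
by rewrite !big_cons; apply: eqI_D.
Qed.

Lemma in_ideal_eqI p q : eqI p q -> in_ideal G q -> in_ideal G p.
Proof.
by rewrite /eqI => H1 H2; have := in_idealD H1 H2; rewrite subrK.
Qed.

End Ideal.

Section Swap.
Variables (K : fieldType) (m n r : nat).
Local Notation G := (@minors2 K m n r).
Local Notation x := (@xv K m n r).
Local Notation eqG := (eqI G).

Lemma swapJ i i' j j' k k' :
  eqG (x i j k * x i' j' k') (x i j' k * x i' j k').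
Proof.
have [<-|njj] := eqVneq j j'; first exact: eqI_refl.
have [E|nik] := eqVneq (i, k) (i', k').
  by case: E => <- <-; apply: eqI_eq; rewrite mulrC.
apply: in_idealG; right; exists i, i', j, j', k, k'; split=> //.
Qed.

Lemma swapJK i i' j j' k k' :
  eqG (x i j k * x i' j' k') (x i j' k' * x i' j k).
Proof.
have [<-|nii] := eqVneq i i'; first by apply: eqI_eq; rewrite mulrC.
have [E|njk] := eqVneq (j, k) (j', k').
  by case: E => <- <-; exact: eqI_refl.
apply: in_idealG; left; exists i, i', j, j', k, k'; split=> //.
Qed.

Lemma swapK i i' j j' k k' :
  eqG (x i j k * x i' j' k') (x i j k' * x i' j' k).
Proof.
apply: eqI_trans (swapJK i i' j j' k k') _.
exact: swapJ.
Qed.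

Definition lo {p} (a b : 'I_p) := if (a <= b)%N then a else b.
Definition hi {p} (a b : 'I_p) := if (a <= b)%N then b else a.

Lemma lo_sym p (a b : 'I_p) : lo a b = lo b a.
Proof.
rewrite /lo; case: leqP => H1; case: leqP => H2 //.
- by apply/val_inj/eqP; rewrite eqn_leq H1 H2.
- by move: (ltn_trans H1 H2); rewrite ltnn.
Qed.

Lemma hi_sym p (a b : 'I_p) : hi a b = hi b a.
Proof.
rewrite /hi; case: leqP => H1; case: leqP => H2 //.
- by apply/val_inj/eqP; rewrite eqn_leq H1 H2.
- by move: (ltn_trans H1 H2); rewrite ltnn.
Qed.

Lemma sortpair_le (i i' : 'I_m) (j j' : 'I_n) (k k' : 'I_r) : (i <= i')%N ->
  eqG (x i j k * x i' j' k') (x (lo i i') (lo j j') (lo k k') * x (hi i i') (hi j j') (hi k k')).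
Proof.
move=> Hi; rewrite /lo /hi Hi.
case: (leqP j j') => Hj; case: (leqP k k') => Hk.
- exact: eqI_refl.
- exact: swapK.
- exact: swapJ.
- exact: swapJK.
Qed.

Lemma sortpair (i i' : 'I_m) (j j' : 'I_n) (k k' : 'I_r) :
  eqG (x i j k * x i' j' k') (x (lo i i') (lo j j') (lo k k') * x (hi i i') (hi j j') (hi k k')).
Proof.
case: (leqP i i') => Hi; first exact: sortpair_le.
rewrite mulrC lo_sym (lo_sym j) (lo_sym k) hi_sym (hi_sym j) (hi_sym k).
by apply: sortpair_le; apply: ltnW.
Qed.

End Swap.

Fixpoint ins {p} (a : 'I_p) (s : seq 'I_p) : seq 'I_p :=
  match s with
  | [::] => [:: a]
  | b :: s' => if (a <= b)%N then a :: s else b :: ins a s'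
  end.

Definition srt {p} (s : seq 'I_p) := sorted leq (map val s).

Lemma srt_cons p (b : 'I_p) s : srt (b :: s) = all (fun c : 'I_p => (b <= c)%N) s && srt s.
Proof.
rewrite /srt /= path_sortedE; last exact: leq_trans.
by rewrite all_map.
Qed.

Lemma size_ins p (a : 'I_p) s : size (ins a s) = (size s).+1.
Proof. by elim: s => //= b s IH; case: ifP => //= _; rewrite IH. Qed.

Lemma all_ins p (P : pred 'I_p) a s : all P (ins a s) = P a && all P s.
Proof.
elim: s => [|b s IH] /=; first by rewrite andbT.
case: ifP => _ /=; first by [].
by rewrite IH; case: (P a); case: (P b).
Qed.

Lemma srt_ins p (a : 'I_p) s : srt s -> srt (ins a s).
Proof.
elim: s => [|b s IH] //=.
rewrite srt_cons => /andP [Hb Hs].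
case: ifP => H.
  rewrite srt_cons /= H /=; apply/andP; split; last by rewrite srt_cons Hb Hs.
  by apply/allP => c Hc; apply: leq_trans H _; move/allP: Hb; apply.
rewrite srt_cons IH // andbT all_ins Hb andbT.
by apply: ltnW; rewrite ltnNge H.
Qed.

Lemma ins_head p (b : 'I_p) s : srt (b :: s) -> ins b s = b :: s.
Proof.
case: s => [|c s] //=.
by rewrite srt_cons /= => /andP [/andP [-> _] _].
Qed.

Lemma ins_cons p (a b : 'I_p) s : srt (b :: s) ->
  ins a (b :: s) = lo a b :: ins (hi a b) s.
Proof.
move=> H; rewrite /= /lo /hi; case: ifP => // _.
by rewrite ins_head.
Qed.

Section Std.
Variables (K : fieldType) (m n r : nat).
Local Notation G := (@minors2 K m n r).
Local Notation x := (@xv K m n r).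
Local Notation eqG := (eqI G).

Definition stdmon (A : seq 'I_m) (B : seq 'I_n) (C : seq 'I_r) :
  {mpoly K[nvars m n r]} :=
  \prod_(t <- zip (zip A B) C) x t.1.1 t.1.2 t.2.

Lemma stdmon_cons a b c A B C :
  stdmon (a :: A) (b :: B) (c :: C) = x a b c * stdmon A B C.
Proof. by rewrite /stdmon /= big_cons. Qed.

Lemma stdmon_ins A B C a b c :
  size A = size B -> size B = size C -> srt A -> srt B -> srt C ->
  eqG (x a b c * stdmon A B C) (stdmon (ins a A) (ins b B) (ins c C)).
Proof.
elim: A a b c B C => [|a1 A IH] a b c [|b1 B] [|c1 C] //.
  by move=> _ _ _ _ _; apply: eqI_eq; rewrite /= stdmon_cons /stdmon big_nil mulr1.
move=> /eqP; rewrite eqSS => /eqP HAB /eqP; rewrite eqSS => /eqP HBC sA sB sC.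
rewrite (ins_cons a sA) (ins_cons b sB) (ins_cons c sC) !stdmon_cons.
move: sA sB sC; rewrite !srt_cons => /andP [_ sA] /andP [_ sB] /andP [_ sC].
rewrite mulrA.
apply: eqI_trans (_ : eqG _ ((x (lo a a1) (lo b b1) (lo c c1) * x (hi a a1) (hi b b1) (hi c c1)) * stdmon A B C)) _.
  by rewrite ![_ * stdmon A B C]mulrC; apply: eqI_M; apply: sortpair.
rewrite -mulrA; apply: eqI_M; exact: IH.
Qed.

Lemma mon_std d (e : 'X_{1..nvars m n r}) : mdeg e = d ->
  exists A B C, [/\ size A = d, size B = d, size C = d & [&& srt A, srt B & srt C]]
    /\ eqG 'X_[e] (stdmon A B C).
Proof.
elim: d e => [|d IH] e He.
  move/eqP: He; rewrite mdeg_eq0 => /eqP ->.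
  exists [::], [::], [::]; split => //.
  by rewrite mpolyX0 /stdmon big_nil; apply: eqI_refl.
have : [exists v, e v != 0%N].
  case: (boolP [exists v, e v != 0%N]) => // /existsPn H; exfalso.
  have : e == 0%MM.
    by apply/eqP/mnmP => v; rewrite mnm0E; apply/eqP; move: (H v); rewrite negbK.
  by rewrite -mdeg_eq0 He.
case/existsP => v Hv.
have Hle : (U_(v) <= e)%MM by rewrite lep1mP.
have He' : mdeg (e - U_(v))%MM = d.
  by apply/eqP; rewrite -eqSS -He -(submK Hle) mdegD mdeg1 addn1 submK.
have [A [B [C [[sA sB sC /and3P [oA oB oC]] HE]]]] := IH _ He'.
move: (submK Hle) => Ee; rewrite -Ee mpolyXD mulrC.
have Xv : ('X_v : {mpoly K[nvars m n r]}) = x (enum_val v).1.1 (enum_val v).1.2 (enum_val v).2.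
  by rewrite /xv -!surjective_pairing enum_valK.
rewrite Xv.
exists (ins (enum_val v).1.1 A), (ins (enum_val v).1.2 B), (ins (enum_val v).2 C); split.
  by split; rewrite ?size_ins ?sA ?sB ?sC // !srt_ins.
apply: (eqI_trans (eqI_M _ HE)).
apply: stdmon_ins; rewrite ?sA ?sB ?sC //.
Qed.

End Std.

Section Phi.
Variables (K : fieldType) (m n r : nat).
Local Notation G := (@minors2 K m n r).
Local Notation x := (@xv K m n r).
Local Notation eqG := (eqI G).
Local Notation M := (m + n + r)%N.
Local Notation RT := {mpoly K[M]}.

Definition ly (i : 'I_m) : 'I_M := lshift r (lshift n i).
Definition lz (j : 'I_n) : 'I_M := lshift r (rshift m j).
Definition lu (k : 'I_r) : 'I_M := rshift (m + n) k.

Definition psi (t : 'I_m * 'I_n * 'I_r) : RT := 'X_(ly t.1.1) * 'X_(lz t.1.2) * 'X_(lu t.2).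

Definition lq := [tuple psi (enum_val i) | i < nvars m n r].

Definition phi (p : {mpoly K[nvars m n r]}) : RT := p \mPo lq.

Lemma phiM p q : phi (p * q) = phi p * phi q.
Proof. exact: rmorphM. Qed.

Lemma phi_x i j k : phi (x i j k) = 'X_(ly i) * 'X_(lz j) * 'X_(lu k).
Proof.
rewrite /phi /xv comp_mpolyXU -tnth_nth tnth_mktuple enum_rankK.
by [].
Qed.

Lemma phi_G g : G g -> phi g = 0.
Proof.
case=> [[i [i' [j [j' [k [k' [_ [_ ->]]]]]]]]|[i [i' [j [j' [k [k' [_ [_ ->]]]]]]]]];
  rewrite /phi rmorphB /= -!/(phi _) !phiM !phi_x; ring.
Qed.

Lemma phi_ideal p : in_ideal G p -> phi p = 0.
Proof.
move=> [s [Hs ->]]; rewrite /phi rmorph_sum /=; apply: big1_seq => y /= Hy.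
by rewrite -/(phi _) phiM (phi_G (Hs _ Hy)) mulr0.
Qed.

Definition EA (A : seq 'I_m) : 'X_{1..M} := (\sum_(a <- A) U_(ly a))%MM.
Definition EB (B : seq 'I_n) : 'X_{1..M} := (\sum_(b <- B) U_(lz b))%MM.
Definition EC (C : seq 'I_r) : 'X_{1..M} := (\sum_(c <- C) U_(lu c))%MM.

Lemma phi_stdmon A B C : size A = size B -> size B = size C ->
  phi (stdmon K A B C) = 'X_[EA A + EB B + EC C].
Proof.
elim: A B C => [|a A IH] [|b B] [|c C] //=.
  move=> _ _; rewrite /stdmon /= big_nil /EA /EB /EC !big_nil !addm0 mpolyX0.
  by rewrite /phi rmorph1.
move=> [HAB] [HBC]; rewrite stdmon_cons phiM IH // phi_x.
rewrite /EA /EB /EC !big_cons !mpolyXD.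
ring.
Qed.

Lemma sum_count p (A : seq 'I_p) i : (\sum_(a <- A) (a == i : nat))%N = count_mem i A.
Proof. by elim: A => [|a A IH]; rewrite ?big_nil // big_cons IH /= eq_sym. Qed.

Lemma E_ly A B C i : (EA A + EB B + EC C)%MM (ly i) = count_mem i A.
Proof.
rewrite !mnmDE /EA /EB /EC !mnm_sumE.
rewrite [X in (_ + X + _)%N]big1; last first.
  move=> b _; rewrite mnm1E /lz /ly; apply/eqP; rewrite eqb0 -val_eqE /=.
  by rewrite gtn_eqF // ltn_addr.
rewrite [X in (_ + X)%N]big1; last first.
  move=> c _; rewrite mnm1E /lu /ly; apply/eqP; rewrite eqb0 -val_eqE /=.
  by rewrite gtn_eqF // -addnA ltn_addr.
rewrite !addn0 -sum_count; apply: eq_bigr => a _.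
by rewrite mnm1E; congr (nat_of_bool _); apply/eqP/eqP => [|->] //; move/lshift_inj/lshift_inj.
Qed.

Lemma E_lz A B C j : (EA A + EB B + EC C)%MM (lz j) = count_mem j B.
Proof.
rewrite !mnmDE /EA /EB /EC !mnm_sumE.
rewrite [X in (X + _ + _)%N]big1; last first.
  move=> a _; rewrite mnm1E /lz /ly; apply/eqP; rewrite eqb0 -val_eqE /=.
  by rewrite ltn_eqF // ltn_addr.
rewrite [X in (_ + X)%N]big1; last first.
  move=> c _; rewrite mnm1E /lu /lz; apply/eqP; rewrite eqb0 -val_eqE /=.
  by apply/eqP; have := ltn_ord j; lia.
rewrite add0n addn0 -sum_count; apply: eq_bigr => b _.
rewrite mnm1E; congr (nat_of_bool _); apply/eqP/eqP => [|->] //.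
by move/lshift_inj/rshift_inj.
Qed.

Lemma E_lu A B C k : (EA A + EB B + EC C)%MM (lu k) = count_mem k C.
Proof.
rewrite !mnmDE /EA /EB /EC !mnm_sumE.
rewrite [X in (X + _ + _)%N]big1; last first.
  move=> a _; rewrite mnm1E /lu /ly; apply/eqP; rewrite eqb0 -val_eqE /=.
  by rewrite ltn_eqF // -addnA ltn_addr.
rewrite [X in (_ + X + _)%N]big1; last first.
  move=> b _; rewrite mnm1E /lu /lz; apply/eqP; rewrite eqb0 -val_eqE /=.
  by apply/eqP; have := ltn_ord b; lia.
rewrite !add0n -sum_count; apply: eq_bigr => c _.
rewrite mnm1E; congr (nat_of_bool _); apply/eqP/eqP => [|->] //.
by move/rshift_inj.
Qed.

Lemma srt_eq p (A A' : seq 'I_p) : srt A -> srt A' ->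
  (forall i, count_mem i A = count_mem i A') -> A = A'.
Proof.
move=> sA sA' H; apply: (inj_map val_inj).
apply: (sorted_eq leq_trans anti_leq) => //.
apply: perm_map; apply/allP => y _; apply/eqP; exact: H.
Qed.

Lemma E_inj A B C A' B' C' : srt A -> srt B -> srt C -> srt A' -> srt B' -> srt C' ->
  (EA A + EB B + EC C = EA A' + EB B' + EC C')%MM -> [/\ A = A', B = B' & C = C'].
Proof.
move=> sA sB sC sA' sB' sC' E; split; apply: srt_eq => // i.
- by rewrite -(E_ly A B C) -(E_ly A' B' C') E.
- by rewrite -(E_lz A B C) -(E_lz A' B' C') E.
- by rewrite -(E_lu A B C) -(E_lu A' B' C') E.
Qed.

End Phi.

Section Hilb.
Variables (K : fieldType) (m n r d : nat).
Local Notation G := (@minors2 K m n r).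
Local Notation x := (@xv K m n r).
Local Notation eqG := (eqI G).
Local Notation R := {mpoly K[nvars m n r]}.

Definition Idx := [set t : (d.-tuple 'I_m * d.-tuple 'I_n) * d.-tuple 'I_r |
   [&& srt t.1.1, srt t.1.2 & srt t.2]].

Local Notation k := #|Idx|.

Definition std (j : 'I_k) : R :=
  stdmon K (enum_val j).1.1 (enum_val j).1.2 (enum_val j).2.

Lemma stdmonX (A : seq 'I_m) (B : seq 'I_n) (C : seq 'I_r) : stdmon K A B C =
  'X_[\sum_(t <- zip (zip A B) C) U_(enum_rank (t.1.1, t.1.2, t.2))].
Proof.
rewrite -(big_map (fun t : 'I_m * 'I_n * 'I_r => U_(enum_rank (t.1.1, t.1.2, t.2))%MM) xpredT (fun e => e)) -mpolyX_prod big_map.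
by apply: eq_bigr.
Qed.

Lemma mdeg_sumU (N : nat) (T : Type) (s : seq T) (f : T -> 'I_N) :
  mdeg (\sum_(t <- s) U_(f t))%MM = size s.
Proof.
elim: s => [|t s IH]; first by rewrite big_nil mdeg0.
by rewrite big_cons mdegD mdeg1 IH.
Qed.

Lemma std_homog j : std j \is d.-homog.
Proof.
rewrite /std stdmonX dhomogX; apply/eqP; rewrite -[LHS]/(mdeg _) mdeg_sumU.
by rewrite !size_zip !size_tuple !minnn.
Qed.

Lemma mon_std_idx (e : 'X_{1..nvars m n r}) : mdeg e = d ->
  exists j, eqG 'X_[e] (std j).
Proof.
move=> He; have [A [B [C [[sA sB sC /and3P [oA oB oC]] HE]]]] := mon_std K He.
have tA : size A == d by rewrite sA.
have tB : size B == d by rewrite sB.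
have tC : size C == d by rewrite sC.
pose t := (Tuple tA, Tuple tB, Tuple tC).
have Ht : t \in Idx by rewrite inE /= oA oB oC.
exists (enum_rank_in Ht t).
by rewrite /std (enum_rankK_in Ht Ht).
Qed.

Lemma span_mons (l : seq 'X_{1..nvars m n r}) (c : 'X_{1..nvars m n r} -> K) :
  all (fun e => mdeg e == d) l ->
  exists v : 'rV[K]_k, eqG (\sum_(e <- l) c e *: 'X_[e]) (\sum_j v 0 j *: std j).
Proof.
elim: l => [|e l IH] /=.
  move=> _; exists 0; rewrite big_nil; apply: eqI_eq.
  by rewrite big1 // => j _; rewrite mxE scale0r.
move=> /andP [/eqP He Hl]; have [v Hv] := IH Hl.
have [j0 Hj0] := mon_std_idx He.
exists (\row_j (v 0 j + (if j == j0 then c e else 0))).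
rewrite big_cons.
apply: eqI_trans (eqI_D (eqI_Z (c e) Hj0) Hv) _.
apply: eqI_eq.
rewrite [RHS](eq_bigr (fun j => v 0 j *: std j + (if j == j0 then c e else 0) *: std j)); last first.
  by move=> j _; rewrite mxE scalerDl.
rewrite big_split /= addrC; congr (_ + _).
rewrite (bigD1 j0) //= eqxx big1 ?addr0 // => j /negbTE ->.
by rewrite scale0r.
Qed.

Lemma span_homog p : p \is d.-homog ->
  exists v : 'rV[K]_k, eqG p (\sum_j v 0 j *: std j).
Proof.
move=> Hp; rewrite {1}[p]mpolyE; apply: span_mons.
by apply/allP => e He; apply/eqP; apply: (dhomog_mf Hp).
Qed.

Lemma std_indep : indep_mod G d std.
Proof.
split; first exact: std_homog.
move=> c Hc j0.
have H0 := phi_ideal Hc.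
have Hphi j : phi (std j) = 'X_[EA n r (enum_val j).1.1 + EB m r (enum_val j).1.2 + EC m n (enum_val j).2].
  by rewrite /std phi_stdmon // !size_tuple.
move: H0; rewrite /phi linear_sum /= => H0.
have := congr1 (mcoeff (EA n r (enum_val j0).1.1 + EB m r (enum_val j0).1.2 + EC m n (enum_val j0).2)) H0.
rewrite mcoeff0 raddf_sum /= (bigD1 j0) //= big1 ?addr0.
  by rewrite linearZ /= -/(phi _) Hphi mcoeffZ mcoeffX eqxx mulr1.
move=> j Hj; rewrite linearZ /= -/(phi _) Hphi mcoeffZ mcoeffX.
case: eqP => [E|]; last by rewrite mulr0.
have Pj := enum_valP j; have Pj0 := enum_valP j0.
move: Pj Pj0; rewrite !inE => /and3P [o1 o2 o3] /and3P [o1' o2' o3'].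
have [E1 E2 E3] := E_inj o1 o2 o3 o1' o2' o3' E.
have : enum_val j = enum_val j0.
  case: (enum_val j) E1 E2 E3 => [[a b] c'] /= E1 E2 E3.
  case: (enum_val j0) E1 E2 E3 => [[a' b'] c''] /= E1 E2 E3.
  by congr (_, _, _); apply: val_inj.
by move/enum_val_inj => Ejj; rewrite Ejj eqxx in Hj.
Qed.

End Hilb.

Section Hilb2.
Variables (K : fieldType) (m n r d : nat).
Local Notation G := (@minors2 K m n r).
Local Notation eqG := (eqI G).
Local Notation k := #|Idx m n r d|.

Lemma hilb_Idx : hilb_dim G d k.
Proof.
split; first by exists (std K (m:=m) (n:=n) (r:=r) (d:=d)); exact: std_indep.
move=> p [Hh Hind].
have := fun i => span_homog (Hh i).
case/fin_all_exists => V HV.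
pose Mx := \matrix_(i < k.+1, j < k) V i 0 j.
have Hker : kermx Mx != 0.
  rewrite kermx_eq0 /row_free; apply/negP => /eqP H.
  by have := rank_leq_col Mx; rewrite H ltnn.
have [i0 Hi0] : exists i0, row i0 (kermx Mx) != 0.
  case: (boolP [exists i, row i (kermx Mx) != 0]) => [/existsP //|/existsPn H].
  case/negP: Hker; apply/eqP/row_matrixP => i; rewrite row0.
  by apply/eqP; move: (H i); rewrite negbK.
pose c := row i0 (kermx Mx).
have cM : c *m Mx = 0 by rewrite /c -row_mul mulmx_ker row0.
have Hin : in_ideal G (\sum_i c 0 i *: p i).
  apply: in_ideal_eqI (_ : eqG _ (\sum_i c 0 i *: \sum_j V i 0 j *: std K j)) _.
    by apply: eqI_sum => i; apply: eqI_Z.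
  have -> : \sum_i c 0 i *: \sum_j V i 0 j *: std K j = 0.
    rewrite (eq_bigr (fun i => \sum_j (c 0 i * V i 0 j) *: std K j)); last first.
      by move=> i _; rewrite scaler_sumr; apply: eq_bigr => j _; rewrite scalerA.
    rewrite exchange_big /= big1 // => j _.
    rewrite -scaler_suml.
    have -> : \sum_i c 0 i * V i 0 j = (c *m Mx) 0 j.
      by rewrite !mxE; apply: eq_bigr => i _; rewrite /Mx !mxE.
    by rewrite cM mxE scale0r.
  exact: in_ideal0.
have Hc := Hind _ Hin.
case/negP: Hi0; apply/eqP/rowP => j; have := Hc j; rewrite /c !mxE => ->.
by [].
Qed.

End Hilb2.
Local Close Scope ring_scope.

Lemma binC a b : 'C(a + b, a) = 'C(a + b, b).
Proof. by rewrite -{2}(addnK b a) bin_sub // leq_addl. Qed.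

Lemma card_Idx m n r d :
  #|Idx m.+1 n.+1 r.+1 d| = 'C(m + d, m) * 'C(n + d, n) * 'C(r + d, r).
Proof.
have -> : Idx m.+1 n.+1 r.+1 d =
  setX (setX [set t : d.-tuple 'I_m.+1 | sorted leq (map val t)]
             [set t : d.-tuple 'I_n.+1 | sorted leq (map val t)])
       [set t : d.-tuple 'I_r.+1 | sorted leq (map val t)].
  by apply/setP => [[[a b] c]]; rewrite !inE /= andbA.
by rewrite !cardsX !card_sorted_tuples (addnC d m) (addnC d n) (addnC d r) -(binC m d) -(binC n d) -(binC r d).
Qed.

Local Open Scope ring_scope.

Lemma sum_delta (F : nat -> int) (j dd : nat) :
  \sum_(i < dd) (((i : nat) == j)%:R * F i) = if (j < dd)%N then F j else 0.
Proof.
elim: dd => [|dd IH]; first by rewrite big_ord0.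
rewrite big_ord_recr /= IH.
case: (ltngtP j dd) => H.
- by rewrite ltnS ltnW // mul0r addr0.
- by rewrite ltnS leqNgt H /= mul0r addr0.
- by rewrite H ltnSn mul1r add0r.
Qed.

Theorem corollary4p5 (K : fieldType) (m n r : nat)
  (hm : (0 < m)%N) (hn : (0 < n)%N) (hr : (0 < r)%N)
  (lab : Pmnr m n r -> 'I_(Nsize m n r)) (hlab : natural_labeling lab) :
  is_h_polynomial (@minors2 K m n r) (des_poly lab).
Proof.
case: m hm lab hlab => // m _; case: n hn => // n _; case: r hr => // r _.
move=> lab [Hbij Hmono].
have HN : #|{: ('I_m + 'I_n + 'I_r)%type}| = Nsize m.+1 n.+1 r.+1 by rewrite !card_sum !card_ord.
have lab_inj := bij_inj Hbij.
split.
  rewrite /des_poly horner_sum.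
  under eq_bigr do rewrite hornerXn expr1n.
  rewrite sumr_const pnatr_eq0 -lt0n; apply/card_gt0P.
  exists [ffun p => lab p]; rewrite /linext; apply/andP; split.
    by apply/injectiveP => p q; rewrite !ffunE; apply: lab_inj.
  by apply/forallP => p; apply/forallP => q; apply/implyP; rewrite !ffunE; apply: Hmono.
exists (Nsize m.+1 n.+1 r.+1).+1 => d.
exists #|Idx m.+1 n.+1 r.+1 d|; split; first exact: hilb_Idx.
rewrite card_Idx -card_op (partB HN lab_inj Hmono d) /des_poly.
under [RHS]eq_bigr => i _ do rewrite coef_sum mulr_suml.
rewrite exchange_big /= -natz natr_sum; apply: eq_bigr => w Hw.
under eq_bigr => i _ do rewrite coefXn.
rewrite (sum_delta (fun i => ('C(d - i + (Nsize m.+1 n.+1 r.+1).+1 - 1, d - i))%:Z)) ltnS.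
case: leqP => H //.
rewrite natz; congr Posz.
set N := Nsize m.+1 n.+1 r.+1.
have -> : (d - desG lab w + N.+1 - 1 = N + (d - desG lab w))%N by lia.
by rewrite binC.
Qed.
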